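(* Let $(W,\prec)$ be any $\mathsf{MN}$-frame. Then: (1) $\Box p \to \Box\Box p$ is valid in $(W,\prec)$ if and only if $(W,\prec)$ is transitive; (2) $\neg\Box\bot$ is valid in $(W,\prec)$ if and only if $(W,\prec)$ is an $\mathsf{MNP}$-frame; (3) $\neg(\Box p \land \Box\neg p)$ is valid in $(W,\prec)$ if and only if $(W,\prec)$ is an $\mathsf{MND}$-frame. Here $p$ is a propositional variable.
   Context: The modal language has countably many propositional variables, the constant $\bot$, the connective $\to$ and the operator $\Box$; $\top,\neg,\land,\lor,\Diamond$ are the usual abbreviations. An $\mathsf{MN}$-frame is a pair $(W,\prec)$ where $W$ is a non-empty set and $\prec$ is a binary relation between elements of $W$ and non-empty subsets of $W$ satisfying monotonicity: if $x\prec V$ and $V\subseteq U\subseteq W$ then $x\prec U$. An $\mathsf{MN}$-model is $(W,\prec,\Vdash)$ where $(W,\prec)$ is an $\mathsf{MN}$-frame and $\Vdash$ is a relation between $W$ and formulas satisfying the usual Boolean clauses and: $x\Vdash\Box A$ iff for every $V\subseteq W$ with $x\prec V$ there is $y\in V$ with $y\Vdash A$. A formula is valid in a frame if it is forced at every point under every such satisfaction relation on the frame. The frame is transitive if whenever $x\prec V$ and for each $y\in V$ there is $U_y\subseteq W$ with $y\prec U_y$, then $x\prec\bigcup_{y\in V}U_y$. It is an $\mathsf{MNP}$-frame if for every $x\in W$ there is $V\subseteq W$ with $x\prec V$. It is an $\mathsf{MND}$-frame if for every $x\in W$ and every $V\subseteq W$, $x\prec V$ or $x\prec (W\setminus V)$.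 *)

(* Defs.v *)
From Stdlib Require Import Classical.

Inductive form : Type :=
| Var : nat -> form
| Bot : form
| Imp : form -> form -> form
| Box : form -> form.

Definition Neg (A : form) : form := Imp A Bot.
Definition Top : form := Neg Bot.
Definition Or (A B : form) : form := Imp (Neg A) B.
Definition And (A B : form) : form := Neg (Imp A (Neg B)).

Definition subset {W : Type} (V U : W -> Prop) : Prop := forall x, V x -> U x.
Definition nonempty {W : Type} (V : W -> Prop) : Prop := exists y, V y.

Record MNframe : Type := {
  carrier :> Type;
  prec : carrier -> (carrier -> Prop) -> Prop;
  carrier_inhabited : exists x : carrier, True;
  prec_nonempty : forall x V, prec x V -> nonempty V;
  prec_mono : forall x (V U : carrier -> Prop), prec x V -> subset V U -> prec x U
}.

(* Forcing under a valuation of the propositional variables; the forcing relation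
   satisfying the usual clauses is uniquely determined by the valuation. *)
Fixpoint forces (F : MNframe) (val : nat -> F -> Prop) (x : F) (A : form) : Prop :=
  match A with
  | Var n => val n x
  | Bot => False
  | Imp A1 A2 => forces F val x A1 -> forces F val x A2
  | Box A1 => forall V : F -> Prop, prec F x V -> exists y, V y /\ forces F val y A1
  end.

Definition valid_in (F : MNframe) (A : form) : Prop :=
  forall (val : nat -> F -> Prop) (x : F), forces F val x A.

Definition transitive_frame (F : MNframe) : Prop :=
  forall (x : F) (V : F -> Prop) (U : F -> F -> Prop),
    prec F x V ->
    (forall y, V y -> prec F y (U y)) ->
    prec F x (fun z => exists y, V y /\ U y z).

Definition MNP_frame (F : MNframe) : Prop :=
  forall x : F, exists V : F -> Prop, prec F x V.

Definition MND_frame (F : MNframe) : Prop :=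
  forall (x : F) (V : F -> Prop), prec F x V \/ prec F x (fun z => ~ V z).

(* Main.v *)
Require Import Defs.
From Stdlib Require Import Classical.

Theorem proposition3p4 (F : MNframe) (p : nat) :
  (valid_in F (Imp (Box (Var p)) (Box (Box (Var p)))) <-> transitive_frame F) /\
  (valid_in F (Neg (Box Bot)) <-> MNP_frame F) /\
  (valid_in F (Neg (And (Box (Var p)) (Box (Neg (Var p))))) <-> MND_frame F).
Proof.
  split; [|split].
  - split.
    + intros H x V U HV HU.
      apply NNPP; intro Hn.
      set (val := fun (n : nat) (z : F) => ~ (exists y, V y /\ U y z)).
      assert (Hb : forces F val x (Box (Var p))).
      { simpl. intros V' HV'. apply NNPP; intro Hc.
        apply Hn. apply (prec_mono F x V'); auto.
        intros z Hz. apply NNPP; intro Hz'. apply Hc. exists z. split; auto. }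
      destruct (H val x Hb V HV) as [y [Hy Hby]].
      destruct (Hby (U y) (HU y Hy)) as [z [Hz Hpz]].
      apply Hpz. exists y; auto.
    + intros T val x Hb V HV. simpl in Hb |- *.
      apply NNPP; intro Hn.
      assert (Hall : forall y, V y -> prec F y (fun z => ~ val p z)).
      { intros y Hy. apply NNPP; intro Hc. apply Hn. exists y. split; auto.
        intros V' HV'. apply NNPP; intro Hd. apply Hc.
        apply (prec_mono F y V'); auto. intros z Hz Hpz. apply Hd. exists z; auto. }
      pose proof (T x V (fun _ z => ~ val p z) HV Hall) as Hx.
      destruct (Hb _ Hx) as [z [[y [_ Hz]] Hpz]]. auto.
  - split.
    + intros H x. apply NNPP; intro Hn.
      apply (H (fun _ _ => False) x). simpl. intros V HV. exfalso. apply Hn. eauto.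
    + intros H val x. simpl. intro Hb. destruct (H x) as [V HV].
      destruct (Hb V HV) as [y [_ []]].
  - split.
    + intros H x V. apply NNPP; intro Hn.
      apply (H (fun _ z => V z) x). simpl. intro K. apply K; intros V' HV'; apply NNPP; intro Hc; apply Hn.
      * right. apply (prec_mono F x V'); auto. intros z Hz Hvz.
        apply Hc. exists z; auto.
      * left. apply (prec_mono F x V'); auto. intros z Hz. apply NNPP; intro Hz'.
        apply Hc. exists z; auto.
    + intros H val x. simpl. intro K. apply K. intros Hb Hnb.
      destruct (H x (val p)) as [Hp | Hp].
      * destruct (Hnb _ Hp) as [z [Hz Hn]]. exfalso; auto.
      * destruct (Hb _ Hp) as [z [Hz Hpz]]. exfalso; auto.
Qed.
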